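(* Let $Y\colon\mathbb V^N\times\mathbb G^N\to\mathbb R^N$ be a component balanced allocation rule on the class of network games. Then its standard extension $\Psi^Y$ is component balanced, i.e., for every $(v,\rho)\in\mathbb V^N\times\mathbb P^N$ with $v$ component additive and every component $h\in C(g(\rho))$, $\sum_{i\in N(h)}\Psi^Y_i(v,\rho)=\sum_{g\in\mathbb G(\rho)}\rho(g)\cdot v(g\cap h)$.
   Context: $N=\{1,\dots,n\}$ is a finite player set. A link is an unordered pair $ij$ of distinct players; $g_N$ is the set of all links; a network is any $g\subseteq g_N$; $\mathbb G^N$ is the set of all networks. For a network $g$, $N(g)$ is the set of players with at least one link in $g$ and $N_0(g)=N\setminus N(g)$. A component of $g$ is a nonempty subnetwork $h\subseteq g$ that is connected (any two players of $N(h)$ are joined by a path in $h$) and maximal (if $i\in N(h)$ and $ij\in g$ then $ij\in h$); $C(g)$ is the set of components of $g$. A network game is $v\colon\mathbb G^N\to\mathbb R$ with $v(\varnothing)=0$; $\mathbb V^N$ is the set of these; $v$ is component additive if $v(g)=\sum_{h\in C(g)}v(h)$ for all $g$. A network formation probability distribution is $\rho\colon\mathbb G^N\to[0,1]$ with $\sum_g\rho(g)=1$; $\mathbb P^N$ is the set of these; $\mathbb G(\rho)=\{g:\rho(g)>0\}$ and the extent is $g(\rho)=\bigcup_{g\in\mathbb G(\rho)}g$. An allocation rule on network games is a map $Y\colon\mathbb V^N\times\mathbb G^N\to\mathbb R^N$ with $Y_i(v,g)=0$ for every $i\in N_0(g)$; it is component balanced if for every component additive $v$, every network $g$ and every $h\in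 C(g)$, $\sum_{i\in N(h)}Y_i(v,g)=v(h)$. Its standard extension is $\Psi^Y(v,\rho)=\sum_{g\in\mathbb G^N}\rho(g)\,Y(v,g)$. *)

(* Defs.v *)
(* Players N = {1,...,n} are represented by 'I_n. *)
From mathcomp Require Import all_boot all_order all_algebra.
From mathcomp Require Import reals.
Set Implicit Arguments. Unset Strict Implicit. Unset Printing Implicit Defensive.
Import Order.TTheory GRing.Theory Num.Theory.
Local Open Scope ring_scope.

Section Networks.
Variable n : nat.

Definition link := {s : {set 'I_n} | #|s| == 2%N}.
Definition network := {set link}.

Definition players (g : network) : {set 'I_n} :=
  [set i | [exists l in g, i \in val l]].

Definition adj (g : network) : rel 'I_n :=
  fun i j => [exists l in g, val l == [set i; j]].

Definition is_component (g h : network) : bool :=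
  [&& h != set0, h \subset g,
      [forall i in players h, forall j in players h, connect (adj h) i j] &
      [forall i in players h, forall l in g, (i \in val l) ==> (l \in h)]].

Definition components (g : network) : {set network} :=
  [set h | is_component g h].
End Networks.

Section Games.
Variables (R : realType) (n : nat).

Record game := Game { gval :> network n -> R; game0 : gval set0 = 0 }.

Definition comp_additive (v : game) : Prop :=
  forall g : network n, v g = \sum_(h in components g) v h.

Definition allocation_rule (Y : game -> network n -> 'I_n -> R) : Prop :=
  forall v g i, i \notin players g -> Y v g i = 0.

Definition comp_balanced (Y : game -> network n -> 'I_n -> R) : Prop :=
  forall v : game, comp_additive v -> forall g h : network n,
    h \in components g -> \sum_(i in players h) Y v g i = v h.

Definition is_distribution (rho : network n -> R) : Prop :=
  (forall g, 0 <= rho g <= 1) /\ \sum_(g : network n) rho g = 1.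

Definition extent (rho : network n -> R) : network n :=
  \bigcup_(g : network n | 0 < rho g) g.

Definition std_ext (Y : game -> network n -> 'I_n -> R)
  (v : game) (rho : network n -> R) (i : 'I_n) : R :=
  \sum_(g : network n) rho g * Y v g i.
End Games.

(* Main.v *)
Require Import Defs.
From mathcomp Require Import all_boot all_order all_algebra.
From mathcomp Require Import reals.
Import Order.TTheory GRing.Theory Num.Theory.

Set Implicit Arguments.
Section Graph.
Variable n : nat.
Implicit Types g h : network n.

Lemma adj_sym g : symmetric (adj g).
Proof.
move=> i j; rewrite /adj; apply/existsP/existsP => -[l Hl]; exists l; by rewrite setUC.
Qed.

Lemma adj_mono g1 g2 : g1 \subset g2 -> subrel (adj g1) (adj g2).
Proof.
move=> S i j /existsP[l /andP[Hl E]]; apply/existsP; exists l.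
by rewrite E (subsetP S _ Hl).
Qed.

Lemma connect_mono g1 g2 i j : g1 \subset g2 ->
  connect (adj g1) i j -> connect (adj g2) i j.
Proof.
move=> S; apply: connect_sub => x y H; apply: connect1; exact: adj_mono H.
Qed.

Lemma link2 (l : link n) a j : a \in val l -> j \in val l -> a != j ->
  val l = [set j; a].
Proof.
move=> Ha Hj Haj; have H2 : #|val l| = 2 := eqP (valP l).
apply/esym/eqP; rewrite eqEcard H2 cards2 eq_sym Haj andbT.
by apply/subsetP => x; rewrite !inE => /orP[]/eqP->.
Qed.

Lemma in_link_connect g (l : link n) a j : l \in g -> a \in val l ->
  j \in val l -> connect (adj g) j a.
Proof.
move=> Hl Ha Hj; case: (eqVneq a j) => [->|Haj]; first exact: connect0.
apply: connect1; apply/existsP; exists l; rewrite Hl /=; apply/eqP; exact: link2.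
Qed.

Definition comp g i : network n :=
  [set l in g | [exists j in val l, connect (adj g) i j]].

Lemma players_connect g i a : a \in players (comp g i) -> connect (adj g) i a.
Proof.
rewrite inE => /existsP[l /andP[]]; rewrite inE => /andP[Hl /existsP[j /andP[Hj Hc]]] Ha.
apply: connect_trans Hc _; exact: in_link_connect Hl Ha Hj.
Qed.

Lemma lift_path g i : forall p x, path (adj g) x p -> connect (adj g) i x ->
  connect (adj (comp g i)) i x -> connect (adj (comp g i)) i (last x p).
Proof.
elim=> [|y p IH] x //= /andP[Hxy Hp] Hgx Hcx.
apply: IH Hp _ _.
- exact: connect_trans Hgx (connect1 Hxy).
- apply: connect_trans Hcx (connect1 _).
  move: Hxy => /existsP[l /andP[Hl /eqP E]]; apply/existsP; exists l.
  apply/andP; split; last by rewrite E.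
  rewrite inE Hl /=; apply/existsP; exists x; rewrite E !inE eqxx /=; exact: Hgx.
Qed.

Lemma comp_connect g i a : connect (adj g) i a -> connect (adj (comp g i)) i a.
Proof.
move=> /connectP[p Hp ->]; exact: lift_path Hp (connect0 _ _) (connect0 _ _).
Qed.

Lemma comp_is_component g i : i \in players g -> comp g i \in components g.
Proof.
rewrite inE => /existsP[l0 /andP[Hl0 Hi0]].
rewrite inE /is_component; apply/and4P; split.
- apply/set0Pn; exists l0; rewrite inE Hl0 /=; apply/existsP; exists i.
  by rewrite Hi0 connect0.
- by apply/subsetP=> l; rewrite inE => /andP[].
- apply/forallP=> a; apply/implyP=> Ha; apply/forallP=> b; apply/implyP=> Hb.
  have Hs := sym_connect_sym (adj_sym (comp g i)).
  apply: (@connect_trans _ _ i); last exact: comp_connect (players_connect Hb).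
  rewrite Hs; exact: comp_connect (players_connect Ha).
- apply/forallP=> a; apply/implyP=> Ha; apply/forallP=> l; apply/implyP=> Hl.
  apply/implyP=> Hal.
  rewrite inE Hl /=; apply/existsP; exists a; rewrite Hal; exact: players_connect Ha.
Qed.

Lemma closP g h a l : is_component g h -> a \in players h -> l \in g ->
  a \in val l -> l \in h.
Proof.
case/and4P=> _ _ _ /forallP Hcl Ha Hl Hal.
by move: (Hcl a); rewrite Ha /= => /forallP/(_ l); rewrite Hl Hal.
Qed.

Lemma connP g h a b : is_component g h -> a \in players h -> b \in players h ->
  connect (adj h) a b.
Proof.
case/and4P=> _ _ /forallP Hc _ Ha Hb.
by move: (Hc a); rewrite Ha /= => /forallP/(_ b); rewrite Hb.
Qed.

Lemma players_mono g1 g2 : g1 \subset g2 -> players g1 \subset players g2.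
Proof.
move=> S; apply/subsetP=> a; rewrite !inE => /existsP[l /andP[Hl Ha]].
by apply/existsP; exists l; rewrite Ha (subsetP S _ Hl).
Qed.

Lemma comp_unique g h i : h \in components g -> i \in players h -> h = comp g i.
Proof.
rewrite inE => Hh Hi.
have Hsub : h \subset g by case/and4P: Hh.
have step : forall p x, path (adj g) x p -> x \in players h -> last x p \in players h.
  elim=> [|y p IH] x //= /andP[Hxy Hp] Hx; apply: IH Hp _.
  move: Hxy => /existsP[l /andP[Hl /eqP E]].
  have Hlh : l \in h by apply: (closP Hh Hx Hl); rewrite E !inE eqxx.
  by rewrite inE; apply/existsP; exists l; rewrite Hlh E !inE eqxx orbT.
apply/setP => l; rewrite inE; apply/idP/idP.
- move=> Hl; rewrite (subsetP Hsub _ Hl) /=.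
  have /card_gt0P[j Hj] : (0 < #|val l|)%N by rewrite (eqP (valP l)).
  apply/existsP; exists j; rewrite Hj /=.
  apply: (connect_mono _ _ Hsub); apply: (connP _ Hh Hi).
  by rewrite inE; apply/existsP; exists l; rewrite Hl Hj.
- case/andP=> Hl /existsP[j /andP[Hj /connectP[p Hp Ej]]].
  apply: (closP Hh _ Hl Hj); rewrite Ej; exact: step.
Qed.

End Graph.
Unset Implicit Arguments.

Local Open Scope ring_scope.

Lemma key (R : realType) (n : nat) (Y : game R n -> network n -> 'I_n -> R)
  (v : game R n) (g h E : network n) :
  allocation_rule Y -> comp_balanced Y -> comp_additive v ->
  g \subset E -> h \in components E ->
  \sum_(i in players h) Y v g i = v (g :&: h).
Proof.
move=> Halloc Hbal Hadd HgE HhE.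
have HhE' : is_component E h by move: HhE; rewrite inE.
set S := [set h' in components g | h' \subset h].
have HS : components (g :&: h) = S.
  apply/setP => h'; rewrite !inE /is_component subsetI; apply/idP/idP.
  - case/and4P=> Hne /andP[Hg Hh] Hc Hcl; rewrite Hne Hg Hc Hh /= andbT.
    apply/forallP=> a; apply/implyP=> Ha; apply/forallP=> l; apply/implyP=> Hl.
    apply/implyP=> Hal.
    have Hlh : l \in h.
      apply: (closP HhE' _ (subsetP HgE _ Hl) Hal).
      exact: (subsetP (players_mono Hh)).
    move: Hcl => /forallP/(_ a); rewrite Ha /= => /forallP/(_ l).
    by rewrite inE Hl Hlh Hal.
  - case/andP=> /and4P[Hne Hg Hc Hcl] Hh; rewrite Hne Hg Hh Hc /=.
    apply/forallP=> a; apply/implyP=> Ha; apply/forallP=> l; apply/implyP=> Hl.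
    apply/implyP=> Hal.
    move: Hcl => /forallP/(_ a); rewrite Ha /= => /forallP/(_ l).
    rewrite inE in Hl; case/andP: Hl => Hl _.
    by rewrite Hl Hal.
rewrite (Hadd (g :&: h)) HS.
transitivity (\sum_(h' in S) \sum_(i in players h') Y v g i); last first.
  by apply: eq_bigr => h'; rewrite inE => /andP[Hh' _]; apply: Hbal.
have E1 : forall i, i \in players h ->
    Y v g i = \sum_(h' in S | i \in players h') Y v g i.
  move=> i Hi; case Hig: (i \in players g); last first.
    by rewrite Halloc ?Hig // big1_eq.
  have Hcomp := comp_is_component Hig.
  have Hsub : comp g i \subset h.
    rewrite (comp_unique HhE Hi); apply/subsetP => l; rewrite !inE.
    case/andP=> Hl /existsP[j /andP[Hj Hc]].
    rewrite (subsetP HgE _ Hl) /=; apply/existsP; exists j; rewrite Hj /=.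
    exact: (connect_mono _ _ HgE).
  have Hip : i \in players (comp g i).
    move: Hig; rewrite !inE => /existsP[l /andP[Hl Hil]].
    apply/existsP; exists l; rewrite Hil andbT inE Hl /=.
    by apply/existsP; exists i; rewrite Hil connect0.
  rewrite (bigD1 (comp g i)) /=; last by rewrite inE Hcomp Hsub Hip.
  rewrite big1 ?addr0 // => h' /andP[/andP[]]; rewrite inE => /andP[Hh' _] Hih' Hne.
  by rewrite -(comp_unique Hh' Hih') eqxx in Hne.
rewrite (eq_bigr _ E1) (exchange_big_dep (mem S)) /=; last by move=> i j _ /andP[].
apply: eq_bigr => h'; rewrite inE => /andP[Hh'g Hh'h].
apply: eq_bigl => i; case Hi: (i \in players h'); last by rewrite !andbF.
by rewrite Hh'g Hh'h (subsetP (players_mono Hh'h) _ Hi).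
Qed.

Theorem proposition5 (R : realType) (n : nat)
  (Y : game R n -> network n -> 'I_n -> R) :
  allocation_rule Y -> comp_balanced Y ->
  forall (v : game R n) (rho : network n -> R),
    is_distribution rho -> comp_additive v ->
    forall h : network n, h \in components (extent rho) ->
      \sum_(i in players h) std_ext Y v rho i
      = \sum_(g : network n | 0 < rho g) rho g * v (g :&: h).
Proof.
move=> Halloc Hbal v rho [Hrho _] Hadd h Hh.
rewrite /std_ext exchange_big /= (bigID (fun g => 0 < rho g)) /=.
rewrite [X in _ + X]big1 ?addr0.
- apply: eq_bigr => g Hg; rewrite -mulr_sumr; congr (_ * _).
  apply: (@key R n Y v g h (extent rho) Halloc Hbal Hadd _ Hh).
  exact: (bigcup_sup g Hg).
- move=> g Hg; apply: big1 => i _.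
  have -> : rho g = 0.
    case/andP: (Hrho g) => H0 _; apply/eqP; by rewrite eq_le leNgt Hg H0.
  by rewrite mul0r.
Qed.
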